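(* Let $\vdash\subseteq Sqt$ and $\Gamma\subseteq Form$. (1) If $\Gamma$ is maximal $\vdash$-consistent, then $\Gamma$ is $\vdash$-prime. (2) If $\vdash$ satisfies (A) and (Cut), and $\Gamma$ is maximal $R_\to$-consistent and closed under $\wedge$ (i.e. $\alpha,\beta\in\Gamma\Rightarrow\alpha\wedge\beta\in\Gamma$), then $\Gamma$ is $\vdash$-prime.
   Context: $Form$: $\varphi::=p\mid\bot\mid(\varphi\wedge\varphi)\mid(\varphi\to\varphi)$ over a countable set $P0$ ($\wedge$ left-associative, binds tighter than $\to$). Sequents are pairs $(\Gamma,\varphi)$ with $\Gamma\subseteq Form$; $Sqt$ their set; $\Gamma\vdash\varphi$ means $(\Gamma,\varphi)\in\vdash$. (A): $\Gamma\cup\{\varphi\}\vdash\varphi$; (Cut): $\Gamma\cup\{\psi\}\vdash\varphi$ and $\Delta\vdash\psi$ imply $\Gamma\cup\Delta\vdash\varphi$. $\Gamma$ is $\vdash$-deduction closed iff $\Gamma\vdash\psi\Rightarrow\psi\in\Gamma$. $\Gamma$ is maximal $\varphi$-$\vdash$-consistent iff $\Gamma\nvdash\varphi$ and $\Gamma\cup\{\psi\}\vdash\varphi$ for all $\psi\notin\Gamma$; maximal $\vdash$-consistent iff maximal $\varphi$-$\vdash$-consistent for some $\varphi$. $\Phi R_\to\Delta$ iff for all $\varphi,\psi$, $\varphi\to\psi\in\Phi$ and $\varphi\in\Delta$ imply $\psi\in\Delta$. $\Phi(\Delta,\chi)=\{\psi:\exists\alpha\in\Delta,\ \Phi\vdash\alpha\wedge\chi\to\psi\}$.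 For a deduction closed $\Phi$, $\Delta$ is maximal $\Phi R_\to$-$\varphi$-consistent iff $\Delta\nvdash\varphi$, $\Phi R_\to\Delta$, and $\varphi\in\Phi(\Delta,\psi)$ for all $\psi\notin\Delta$; $\Delta$ is maximal $R_\to$-consistent iff it is maximal $\Phi R_\to$-$\varphi$-consistent for some $\varphi$ and some deduction closed $\Phi$. For $n\ge2$ and $\alpha,\beta_1,\dots,\beta_n\in Form$, $\vdash$ satisfies $(\alpha,\{\beta_1,\dots,\beta_n\})$ iff (i) for all $\Gamma\subseteq Form$, $\varphi\in Form$: if $\Gamma\cup\{\beta_i\}\vdash\varphi$ for all $i$, then $\Gamma\cup\{\alpha\}\vdash\varphi$; and (ii) for all $\varphi,\psi_1,\dots,\psi_n$: $\{\psi_i\wedge\beta_i\to\varphi: 1\le i\le n\}\vdash\psi_1\wedge\dots\wedge\psi_n\wedge\alpha\to\varphi$. $\Gamma$ is $\vdash$-prime iff for all $n\ge2$ and $\alpha,\beta_1,\dots,\beta_n$ such that $\vdash$ satisfies $(\alpha,\{\beta_1,\dots,\beta_n\})$ and $\alpha\in\Gamma$, some $\beta_i\in\Gamma$. *)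

(* Defs.v *)
From Stdlib Require Import List Arith.
Import ListNotations.

Section Defs.
Context {P0 : Type}.

Inductive form : Type :=
| Var : P0 -> form
| Bot : form
| And : form -> form -> form
| Imp : form -> form -> form.

(* Sets of formulas are predicates; a consequence relation |- is a set of
   sequents (Gamma, phi), i.e. a relation between sets of formulas and formulas. *)
Definition fset := form -> Prop.
Definition cons_rel := fset -> form -> Prop.

Definition setU (A B : fset) : fset := fun x => A x \/ B x.
Definition set1 (a : form) : fset := fun x => x = a.

Definition satA (vd : cons_rel) : Prop :=
  forall (G : fset) (phi : form), vd (setU G (set1 phi)) phi.

Definition satCut (vd : cons_rel) : Prop :=
  forall (G D : fset) (phi psi : form),
    vd (setU G (set1 psi)) phi -> vd D psi -> vd (setU G D) phi.

Definition ded_closed (vd : cons_rel) (G : fset) : Prop :=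
  forall psi, vd G psi -> G psi.

Definition max_cons_for (vd : cons_rel) (phi : form) (G : fset) : Prop :=
  ~ vd G phi /\ forall psi, ~ G psi -> vd (setU G (set1 psi)) phi.

Definition max_cons (vd : cons_rel) (G : fset) : Prop :=
  exists phi, max_cons_for vd phi G.

Definition R_imp (Phi D : fset) : Prop :=
  forall phi psi, Phi (Imp phi psi) -> D phi -> D psi.

Definition PhiDC (vd : cons_rel) (Phi D : fset) (chi : form) : fset :=
  fun psi => exists alpha, D alpha /\ vd Phi (Imp (And alpha chi) psi).

Definition max_R_cons_for (vd : cons_rel) (Phi : fset) (phi : form) (D : fset) : Prop :=
  ~ vd D phi /\ R_imp Phi D /\
  forall psi, ~ D psi -> PhiDC vd Phi D psi phi.

Definition max_R_cons (vd : cons_rel) (D : fset) : Prop :=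
  exists phi Phi, ded_closed vd Phi /\ max_R_cons_for vd Phi phi D.

Definition bigAnd (ps : list form) : form :=
  match ps with
  | [] => Bot (* not used: lists have length >= 2 *)
  | p :: ps' => fold_left And ps' p
  end.

(* |- satisfies (alpha, {beta_1,...,beta_n}), with bs = [beta_1; ...; beta_n] *)
Definition satisfies (vd : cons_rel) (alpha : form) (bs : list form) : Prop :=
  (forall (G : fset) (phi : form),
      (forall i, i < length bs -> vd (setU G (set1 (nth i bs Bot))) phi) ->
      vd (setU G (set1 alpha)) phi)
  /\
  (forall (phi : form) (ps : list form), length ps = length bs ->
      vd (fun x => exists i, i < length bs /\
                     x = Imp (And (nth i ps Bot) (nth i bs Bot)) phi)
         (Imp (And (bigAnd ps) alpha) phi)).

Definition prime (vd : cons_rel) (G : fset) : Prop :=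
  forall (alpha : form) (bs : list form),
    2 <= length bs -> satisfies vd alpha bs -> G alpha ->
    exists i, i < length bs /\ G (nth i bs Bot).

End Defs.

Arguments form : clear implicits.
Arguments fset : clear implicits.
Arguments cons_rel : clear implicits.

(* Main.v *)
Require Import Defs.
From Stdlib Require Import List Arith.
From Stdlib Require Import Lia Classical FunctionalExtensionality PropExtensionality.

Lemma setU_in (P0 : Type) (G : fset P0) a : G a -> setU G (set1 a) = G.
Proof.
  intro Ha; apply functional_extensionality; intro x; apply propositional_extensionality.
  unfold setU, set1; split; [intros [H|H]; [exact H| subst; exact Ha] | auto].
Qed.

Lemma choose_list (P0 : Type) (Q : nat -> form P0 -> Prop) (n : nat) :
  (forall i, i < n -> exists a, Q i a) ->
  exists ps, length ps = n /\ forall i, i < n -> Q i (nth i ps Bot).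
Proof.
  revert Q; induction n; intros Q H.
  - exists nil; split; [reflexivity| intros; lia].
  - destruct (H 0 ltac:(lia)) as [a Ha].
    destruct (IHn (fun i x => Q (S i) x)) as [ps [Hl Hp]].
    + intros i Hi; apply H; lia.
    + exists (a :: ps); split; [simpl; lia|].
      intros [|i] Hi; simpl; [exact Ha| apply Hp; lia].
Qed.

Lemma fold_in (P0 : Type) (G : fset P0) :
  (forall a b, G a -> G b -> G (And a b)) ->
  forall ps p, G p -> (forall x, In x ps -> G x) -> G (fold_left And ps p).
Proof.
  intros HA; induction ps; intros p Hp Hx; simpl; auto.
  apply IHps; [apply HA; auto; apply Hx; left; auto| intros; apply Hx; right; auto].
Qed.

Theorem mainTheorem11 (P0 : Type)
  (P0_countable : exists f : P0 -> nat, forall x y, f x = f y -> x = y)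
  (vd : cons_rel P0) (G : fset P0) :
  (max_cons vd G -> prime vd G) /\
  (satA vd -> satCut vd -> max_R_cons vd G ->
     (forall a b, G a -> G b -> G (And a b)) -> prime vd G).
Proof.
  split.
  - intros [phi [Hn Hm]] alpha bs Hlen [H1 H2] Ha.
    apply NNPP; intro Hno.
    apply Hn. rewrite <- (setU_in _ G alpha Ha). apply H1.
    intros i Hi. apply Hm. intro Hb. apply Hno. exists i; auto.
  - intros HA HC [phi [Phi [Hdc [Hn [HR Hm]]]]] HAnd alpha bs Hlen [H1 H2] Ha.
    apply NNPP; intro Hno.
    destruct (choose_list P0 (fun i a => G a /\ vd Phi (Imp (And a (nth i bs Bot)) phi))
               (length bs)) as [ps [Hl Hp]].
    { intros i Hi. apply Hm. intro Hb. apply Hno. exists i; auto. }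
    assert (Hmono : forall S T (c : form P0), vd S c -> (forall x, S x -> T x) -> vd T c).
    { intros S T c HS HST.
      assert (E : setU T S = T).
      { apply functional_extensionality; intro x; apply propositional_extensionality.
        unfold setU; split; [intros [h|h]; auto| auto]. }
      rewrite <- E. apply (HC T S c c); [apply HA| exact HS]. }
    specialize (H2 phi ps Hl).
    assert (HPhi : Phi (Imp (And (bigAnd ps) alpha) phi)).
    { apply Hdc. eapply Hmono; [exact H2|].
      intros x [i [Hi ->]]. apply Hdc. apply Hp; auto. }
    assert (Hbig : G (bigAnd ps)).
    { destruct ps as [|p ps']; [simpl in Hl; lia|]. simpl.
      apply fold_in; auto.
      - apply (Hp 0); lia.
      - intros x Hx. destruct (In_nth ps' x Bot Hx) as [k [Hk Hkx]].
        subst x. apply (Hp (S k)). simpl in Hl; lia. }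
    assert (Hphi : G phi) by (eapply HR; [exact HPhi| apply HAnd; auto]).
    apply Hn. rewrite <- (setU_in _ G phi Hphi). apply HA.
Qed.
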